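(* Assume (H1)–(H5), let $z\in(0,z_s)$ and $\eta\in(0,\tfrac12\log\frac{z_s}{z})$. There exists a constant $K>0$, depending only on $(a_i)$, $(b_i)$, $z$ and $\eta$, such that for every compactly supported sequence $h=(h_i)_{i\ge1}$, $$\|L(h)\|_{\mathcal Z}\le K\|h\|_{\mathcal Z_{\mathcal D}}.$$
   Context: Let $(a_i)_{i\ge1}$, $(b_i)_{i\ge1}$ be nonnegative sequences. $Q_1=1$, $Q_i=\prod_{j=2}^i\frac{a_{j-1}}{b_j}$ for $i\ge2$; $z_s$ is the radius of convergence of $\sum_ia_iQ_iz^i$. For fixed $z\in(0,z_s)$ put $\Theta_i=Q_iz^i$. Define $\sigma_1=3a_1z+\sum_{i\ge1}a_i\Theta_i$ and $\sigma_i=a_iz+b_i$ for $i\ge2$. $\mathcal Z$ is the space of sequences with $\|h\|_{\mathcal Z}=\sum_ie^{\eta i}\Theta_i|h_i|<\infty$ and $\mathcal Z_{\mathcal D}$ those with $\|h\|_{\mathcal Z_{\mathcal D}}=\sum_i(1+\sigma_i)e^{\eta i}\Theta_i|h_i|<\infty$. Linear operators $S,P$ are defined on compactly supported sequences $h$ by: for all compactly supported $\varphi$, $\sum_iS_i(h)\Theta_i\varphi_i=\sum_{i\ge1}[\varphi_{i+1}-\varphi_i-\varphi_1]a_i\Theta_1\Theta_i(h_i+h_1-h_{i+1})$ and $\sum_iP_i(h)\Theta_i\varphi_i=-\varphi_1\big(a_1\Theta_1^2h_2+\sum_{i\ge1}a_i\Theta_1\Theta_ih_{i+1}\big)$; and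 $L=S+P$. (H1): for some $\alpha\in[0,1]$ there exists $a\ge0$ with $0\le a_i\le a\,i^\alpha$ and $b_i\ge0$ for all $i$. (H2): $\inf_i a_i>0$ and $\inf_i b_i>0$. (H3): $\lim_{i\to\infty}Q_{i+1}/Q_i=1/z_s$. (H4): there is $l>0$ with $\lim_{i\to\infty}a_{i+1}/a_i=l$. (H5): there exist $\beta\in[0,1]$ and $b>0$ with $b_i\le b\,i^\beta$ for all $i\ge1$. *)

(* Defs.v *)
From Stdlib Require Import Reals Lra.
From Coquelicot Require Import Coquelicot.
Open Scope R_scope.

(* Sequences are maps nat -> R; only indices i >= 1 are meaningful
   (index 0 is ignored everywhere). *)

(* Q_1 = 1, Q_i = prod_{j=2}^i a_{j-1}/b_j, i.e. Q_{m+1} = Q_m * a_m / b_{m+1}. *)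
Fixpoint Qseq (a b : nat -> R) (n : nat) : R :=
  match n with
  | O => 1
  | S m => match m with
           | O => 1
           | S _ => Qseq a b m * a m / b n
           end
  end.

Definition zs (a b : nat -> R) : Rbar :=
  CV_radius (fun n => match n with O => 0 | _ => a n * Qseq a b n end).

Definition Theta (a b : nat -> R) (z : R) (i : nat) : R := Qseq a b i * z ^ i.

Definition compact_support (h : nat -> R) : Prop :=
  exists N : nat, forall i : nat, (N < i)%nat -> h i = 0.

Definition wS (a b : nat -> R) (z : R) (h : nat -> R) (i : nat) : R :=
  a i * Theta a b z 1 * Theta a b z i * (h i + h 1%nat - h (S i)).

(* S(h): from sum_i S_i(h) Theta_i phi_i = sum_{i>=1} [phi_{i+1}-phi_i-phi_1] w_i,
   the coefficient of phi_1 is -w_1 - sum_{i>=1} w_i and that of phi_j (j>=2)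
   is w_{j-1} - w_j. *)
Definition Sop (a b : nat -> R) (z : R) (h : nat -> R) (j : nat) : R :=
  match j with
  | O => 0
  | S O => (- wS a b z h 1%nat - Series (fun n => wS a b z h (S n))) / Theta a b z 1
  | S (S _ as m) => (wS a b z h m - wS a b z h j) / Theta a b z j
  end.

Definition Pop (a b : nat -> R) (z : R) (h : nat -> R) (j : nat) : R :=
  match j with
  | S O => - (a 1%nat * (Theta a b z 1) ^ 2 * h 2%nat
              + Series (fun n => a (S n) * Theta a b z 1 * Theta a b z (S n) * h (S (S n))))
           / Theta a b z 1
  | _ => 0
  end.

Definition Lop (a b : nat -> R) (z : R) (h : nat -> R) (j : nat) : R :=
  Sop a b z h j + Pop a b z h j.

Definition sigma (a b : nat -> R) (z : R) (i : nat) : R :=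
  match i with
  | S O => 3 * a 1%nat * z + Series (fun n => a (S n) * Theta a b z (S n))
  | _ => a i * z + b i
  end.

(* terms of the weighted norms, indexed from i = 1 (series index n <-> i = n+1) *)
Definition normZ_term (a b : nat -> R) (z eta : R) (h : nat -> R) (n : nat) : R :=
  exp (eta * INR (S n)) * Theta a b z (S n) * Rabs (h (S n)).

Definition normZ (a b : nat -> R) (z eta : R) (h : nat -> R) : R :=
  Series (normZ_term a b z eta h).

Definition normZD (a b : nat -> R) (z eta : R) (h : nat -> R) : R :=
  Series (fun n => (1 + sigma a b z (S n)) * exp (eta * INR (S n))
                   * Theta a b z (S n) * Rabs (h (S n))).

Definition H1 (a b : nat -> R) : Prop :=
  exists alpha : R, 0 <= alpha <= 1 /\ exists a0 : R, 0 <= a0 /\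
    forall i : nat, (1 <= i)%nat ->
      0 <= a i <= a0 * Rpower (INR i) alpha /\ 0 <= b i.

Definition H2 (a b : nat -> R) : Prop :=
  (exists ca : R, 0 < ca /\ forall i : nat, (1 <= i)%nat -> ca <= a i) /\
  (exists cb : R, 0 < cb /\ forall i : nat, (1 <= i)%nat -> cb <= b i).

Definition H3 (a b : nat -> R) : Prop :=
  is_lim_seq (fun n => Qseq a b (S (S n)) / Qseq a b (S n)) (Rbar_inv (zs a b)).

Definition H4 (a : nat -> R) : Prop :=
  exists l : R, 0 < l /\ is_lim_seq (fun n => a (S (S n)) / a (S n)) l.

Definition H5 (b : nat -> R) : Prop :=
  exists beta : R, 0 <= beta <= 1 /\ exists b0 : R, 0 < b0 /\
    forall i : nat, (1 <= i)%nat -> b i <= b0 * Rpower (INR i) beta.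

(* Main.v *)
Require Import Defs.
From Stdlib Require Import Reals Lra Lia.
From Coquelicot Require Import Coquelicot.
Open Scope R_scope.

Lemma exp_ge1 (t : R) : 0 <= t -> 1 <= exp t.
Proof. intros Ht. rewrite <- exp_0. destruct Ht as [Ht|Ht].
  - left; apply exp_increasing; lra.
  - rewrite Ht; lra. Qed.

Lemma exp_le_mono (x y : R) : x <= y -> exp x <= exp y.
Proof. intros [H|H]. left; apply exp_increasing; auto. rewrite H; lra. Qed.

Lemma exp_INR (eta : R) (n : nat) : exp (eta * INR n) = exp eta ^ n.
Proof. induction n as [|n IH].
  - simpl. rewrite Rmult_0_r. apply exp_0.
  - rewrite S_INR, Rmult_plus_distr_l, exp_plus, IH, Rmult_1_r. simpl. ring. Qed.

Lemma ex_series_zero : ex_series (fun _ : nat => 0).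
Proof.
  exists (0 * (/ (1 - /2))).
  apply is_series_ext with (fun n => 0 * ((/2)^n)).
  - intros n. apply Rmult_0_l.
  - apply (@is_series_scal_l R_AbsRing R_NormedModule 0 (fun n => (/2)^n)).
    apply is_series_geom. rewrite Rabs_pos_eq; lra.
Qed.

Lemma ex_series_evzero (f : nat -> R) (N : nat) :
  (forall n, (N <= n)%nat -> f n = 0) -> ex_series f.
Proof.
  intros Hf. apply (proj2 (ex_series_incr_n f N)).
  apply ex_series_ext with (fun _ => 0).
  - intros n. rewrite Hf; auto; lia.
  - apply ex_series_zero.
Qed.

Lemma series_nonneg (f : nat -> R) : (forall n, 0 <= f n) -> ex_series f -> 0 <= Series f.
Proof. intros Hf Hs.
  assert (Series (fun _ : nat => 0) = 0).
  { transitivity (Series (fun n => 0 * f n)).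
    - apply Series_ext. intros n. rewrite Rmult_0_l. reflexivity.
    - rewrite Series_scal_l. apply Rmult_0_l. }
  rewrite <- H. apply Series_le; auto. intros n; split; [lra | auto]. Qed.

Lemma series_first (f : nat -> R) : (forall n, 0 <= f n) -> ex_series f ->
  f 0%nat <= Series f /\ Series (fun n => f (S n)) <= Series f.
Proof. intros Hf Hs. rewrite (Series_incr_1 f Hs).
  assert (0 <= Series (fun n => f (S n))).
  { apply series_nonneg; auto. apply (proj1 (ex_series_incr_1 f)); auto. }
  specialize (Hf 0%nat). lra. Qed.

Lemma Theta_1 (a b : nat -> R) (z : R) : Theta a b z 1 = z.
Proof. unfold Theta; simpl; ring. Qed.

Lemma Theta_rec (a b : nat -> R) (z : R) (i : nat) : (1 <= i)%nat -> b (S i) <> 0 ->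
  a i * z * Theta a b z i = b (S i) * Theta a b z (S i).
Proof. intros Hi Hb. destruct i as [|m]; [lia|].
  unfold Theta.
  change (Qseq a b (S (S m))) with (Qseq a b (S m) * a (S m) / b (S (S m))).
  change (z ^ (S (S m))) with (z * z ^ (S m)). field. auto. Qed.

Lemma Theta_pos (a b : nat -> R) (z : R) : 0 < z ->
  (forall i, (1 <= i)%nat -> 0 < a i /\ 0 < b i) -> forall i, 0 < Theta a b z i.
Proof. intros Hz Hab i. unfold Theta. apply Rmult_lt_0_compat; [|apply pow_lt; auto].
  induction i as [|m IH]; [simpl; lra|].
  destruct m as [|k]; [simpl; lra|].
  change (Qseq a b (S (S k))) with (Qseq a b (S k) * a (S k) / b (S (S k))).
  destruct (Hab (S k)) as [H1 _]; [lia|]. destruct (Hab (S (S k))) as [_ H2]; [lia|].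
  unfold Rdiv. apply Rmult_lt_0_compat; [apply Rmult_lt_0_compat; auto|].
  apply Rinv_0_lt_compat; auto. Qed.

Lemma u_series (a b : nat -> R) (z eta : R) : 0 < z -> 0 < eta ->
  Rbar_lt (Finite (z * exp (2 * eta))) (zs a b) ->
  ex_series (fun n => exp (eta * INR (S n)) * a (S n) * z * Theta a b z (S n)).
Proof. intros Hz He Hlt.
  set (A := fun n => match n with O => 0 | _ => a n * Qseq a b n end).
  assert (Hx : Rbar_lt (Rabs (z * exp eta)) (CV_radius A)).
  { apply Rbar_le_lt_trans with (Finite (z * exp (2 * eta))); [|exact Hlt].
    simpl. rewrite Rabs_pos_eq; [|apply Rmult_le_pos; [lra|apply Rlt_le, exp_pos]].
    apply Rmult_le_compat_l; [lra|]. apply exp_le_mono; lra. }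
  pose proof (CV_radius_inside A _ Hx) as Hp. unfold ex_pseries in Hp.
  apply (proj1 (ex_series_incr_1 _)) in Hp.
  apply (@ex_series_scal_l R_AbsRing R_NormedModule z) in Hp.
  eapply ex_series_ext; [|exact Hp].
  intros n.
  change (z * (pow_n (z * exp eta) (S n) * (a (S n) * Qseq a b (S n))) =
    exp (eta * INR (S n)) * a (S n) * z * (Qseq a b (S n) * z ^ (S n))).
  rewrite pow_n_pow, exp_INR, Rpow_mult_distr. ring.
Qed.

Lemma exR_le (f g : nat -> R) : (forall n, Rabs (f n) <= g n) -> ex_series g -> ex_series f.
Proof. intros H Hg. apply (@ex_series_le R_AbsRing R_CompleteNormedModule f g); auto. Qed.

Lemma exR_scal (c : R) (f : nat -> R) : ex_series f -> ex_series (fun n => c * f n).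
Proof. intros H. apply (@ex_series_scal_l R_AbsRing R_NormedModule c f H). Qed.

Lemma exR_plus (f g : nat -> R) : ex_series f -> ex_series g -> ex_series (fun n => f n + g n).
Proof. intros H1 H2. apply (@ex_series_plus R_AbsRing R_NormedModule f g H1 H2). Qed.

Lemma exR_S (f : nat -> R) : ex_series f -> ex_series (fun n => f (S n)).
Proof. intros H. apply (proj1 (@ex_series_incr_1 R_AbsRing R_NormedModule f)); auto. Qed.

Lemma exR_S' (f : nat -> R) : ex_series (fun n => f (S n)) -> ex_series f.
Proof. intros H. apply (proj2 (@ex_series_incr_1 R_AbsRing R_NormedModule f)); auto. Qed.

Theorem mainTheorem17 (a b : nat -> R) (z eta : R) :
  H1 a b -> H2 a b -> H3 a b -> H4 a -> H5 b ->
  0 < z -> Rbar_lt (Finite z) (zs a b) ->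
  (* eta in (0, (1/2) log(z_s / z))  <->  0 < eta /\ z * exp(2 eta) < z_s *)
  0 < eta -> Rbar_lt (Finite (z * exp (2 * eta))) (zs a b) ->
  exists K : R, 0 < K /\
    forall h : nat -> R, compact_support h ->
      ex_series (normZ_term a b z eta (Lop a b z h)) /\
      normZ a b z eta (Lop a b z h) <= K * normZD a b z eta h.
Proof.
  intros HH1 HH2 _ _ _ Hz _ He Hzs2.
  destruct HH1 as [al [_ [a0 [_ Ha]]]].
  destruct HH2 as [[ca [Hca Hca']] [cb [Hcb Hcb']]].
  assert (Hab : forall i, (1 <= i)%nat -> 0 < a i /\ 0 < b i).
  { intros i Hi. split; [apply Rlt_le_trans with ca; auto | apply Rlt_le_trans with cb; auto]. }
  assert (Thp : forall i, 0 < Theta a b z i) by (apply Theta_pos; auto).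
  assert (Th1 : Theta a b z 1%nat = z) by apply Theta_1.
  assert (Threc : forall i, (1 <= i)%nat -> a i * z * Theta a b z i = b (S i) * Theta a b z (S i)).
  { intros i Hi. apply Theta_rec; auto. apply Rgt_not_eq, (Hab (S i)); lia. }
  assert (Ege1 : forall i, 1 <= exp (eta * INR i)).
  { intros i; apply exp_ge1. apply Rmult_le_pos; [lra| apply pos_INR]. }
  assert (ES : forall i, exp (eta * INR (S i)) = exp eta * exp (eta * INR i)).
  { intros i; rewrite !exp_INR; simpl; ring. }
  assert (E1 : exp (eta * INR 1) = exp eta). { rewrite exp_INR; simpl; ring. }
  assert (Eep : 1 <= exp eta) by (apply exp_ge1; lra).
  set (uS := fun n => exp (eta * INR (S n)) * a (S n) * z * Theta a b z (S n)).
  assert (HuS : ex_series uS) by (apply u_series; auto).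
  assert (uSnn : forall n, 0 <= uS n).
  { intros n; unfold uS. pose proof (Hab (S n) ltac:(lia)) as [? ?]. pose proof (Thp (S n)).
    pose proof (Ege1 (S n)).
    apply Rmult_le_pos; [|lra]. apply Rmult_le_pos; [|lra]. apply Rmult_le_pos; lra. }
  set (U := Series uS).
  assert (HU : 0 <= U) by (apply series_nonneg; auto).
  assert (Hsig1 : 0 <= Series (fun n => a (S n) * Theta a b z (S n))).
  { apply series_nonneg.
    - intros n. pose proof (Hab (S n) ltac:(lia)); pose proof (Thp (S n)). apply Rmult_le_pos; lra.
    - apply (exR_le _ (fun n => / z * uS n)); [|apply exR_scal; auto]. intros n.
      pose proof (Hab (S n) ltac:(lia)) as [? ?]; pose proof (Thp (S n)).
      rewrite Rabs_pos_eq by (apply Rmult_le_pos; lra).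
      unfold uS. replace (/ z * (exp (eta * INR (S n)) * a (S n) * z * Theta a b z (S n)))
        with (exp (eta * INR (S n)) * (a (S n) * Theta a b z (S n))) by (field; lra).
      rewrite <- (Rmult_1_l (a (S n) * Theta a b z (S n))) at 1.
      apply Rmult_le_compat_r; [apply Rmult_le_pos; lra | apply Ege1]. }
  assert (Hsig : forall i, (1 <= i)%nat -> a i * z <= 1 + Defs.sigma a b z i /\ 0 <= Defs.sigma a b z i /\
                   ((2 <= i)%nat -> b i <= 1 + Defs.sigma a b z i)).
  { intros i Hi. destruct i as [|[|k]]; [lia| |].
    - change (Defs.sigma a b z 1%nat) with (3 * a 1%nat * z + Series (fun n => a (S n) * Theta a b z (S n))).
      pose proof (Hab 1%nat ltac:(lia)) as [? ?].
      assert (0 < a 1%nat * z) by (apply Rmult_lt_0_compat; lra).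
      split; [|split]; [lra|lra|intros; lia].
    - change (Defs.sigma a b z (S (S k))) with (a (S (S k)) * z + b (S (S k))).
      pose proof (Hab (S (S k)) ltac:(lia)) as [? ?]. assert (0 < a (S (S k)) * z) by (apply Rmult_lt_0_compat; lra).
      split; [|split]; [lra|lra|intros; lra]. }
  exists ((3 * exp eta + 1) * (2 + U / (exp eta * z)) + 2 * exp eta).
  split.
  { assert (0 <= U / (exp eta * z)).
    { apply Rmult_le_pos; auto. apply Rlt_le, Rinv_0_lt_compat, Rmult_lt_0_compat; lra. }
    nra. }
  intros h [N HN].
  set (p := fun i => (1 + Defs.sigma a b z i) * exp (eta * INR i) * Theta a b z i * Rabs (h i)).
  assert (pnn : forall i, (1 <= i)%nat -> 0 <= p i).
  { intros i Hi. unfold p. destruct (Hsig i Hi) as [_ [? _]]. pose proof (Thp i). pose proof (Ege1 i).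
    pose proof (Rabs_pos (h i)).
    apply Rmult_le_pos; [|lra]. apply Rmult_le_pos; [|lra]. apply Rmult_le_pos; lra. }
  set (pS := fun n => p (S n)).
  assert (pSnn : forall n, 0 <= pS n) by (intros n; apply pnn; lia).
  assert (HpS : ex_series pS).
  { apply (ex_series_evzero _ N). intros n Hn. unfold pS, p. rewrite (HN (S n)) by lia.
    rewrite Rabs_R0; ring. }
  assert (HD : normZD a b z eta h = Series pS) by reflexivity.
  rewrite HD.
  set (D := Series pS).
  assert (HpSS : ex_series (fun n => pS (S n))) by (apply exR_S; auto).
  destruct (series_first pS pSnn HpS) as [Dp1 DS].
  destruct (series_first (fun n => pS (S n)) (fun n => pSnn (S n)) HpSS) as [Dp2 _].
  fold D in Dp1, DS.
  assert (Dnn : 0 <= D) by (pose proof (pSnn O); lra).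
  assert (Ez : 0 < exp eta * z) by (apply Rmult_lt_0_compat; [apply exp_pos|lra]).
  set (c := p 1%nat / (exp eta * z)).
  assert (Hh1 : Rabs (h 1%nat) <= c).
  { unfold c. apply Rmult_le_reg_l with (exp eta * z); auto.
    replace (exp eta * z * (p 1%nat / (exp eta * z))) with (p 1%nat) by (field; lra).
    unfold p. rewrite E1, Th1. destruct (Hsig 1%nat ltac:(lia)) as [_ [? _]].
    pose proof (Rabs_pos (h 1%nat)).
    assert (0 <= exp eta * z * Rabs (h 1%nat)) by (apply Rmult_le_pos; lra).
    replace ((1 + Defs.sigma a b z 1) * exp eta * z * Rabs (h 1%nat))
      with ((1 + Defs.sigma a b z 1) * (exp eta * z * Rabs (h 1%nat))) by ring.
    rewrite <- (Rmult_1_l (exp eta * z * Rabs (h 1%nat))) at 1.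
    apply Rmult_le_compat_r; lra. }
  assert (cnn : 0 <= c) by (pose proof (Rabs_pos (h 1%nat)); lra).
  assert (cD : c <= D / (exp eta * z)).
  { unfold c, Rdiv. apply Rmult_le_compat_r; [apply Rlt_le, Rinv_0_lt_compat; auto|]. exact Dp1. }
  set (rS := fun n => pS n + pS (S n) + uS n * c).
  assert (rSnn : forall n, 0 <= rS n).
  { intros n. unfold rS. pose proof (pSnn n); pose proof (pSnn (S n)); pose proof (uSnn n).
    assert (0 <= uS n * c) by (apply Rmult_le_pos; auto). lra. }
  assert (HuSc : ex_series (fun n => uS n * c)).
  { apply ex_series_ext with (fun n => c * uS n); [intros; apply Rmult_comm|]. apply exR_scal; auto. }
  assert (HrS : ex_series rS).
  { unfold rS. apply exR_plus; auto. apply exR_plus; auto. }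
  set (R0 := Series rS).
  assert (HR : R0 <= (2 + U / (exp eta * z)) * D).
  { unfold R0, rS. rewrite Series_plus; [|apply exR_plus; auto|auto].
    rewrite Series_plus by auto. rewrite Series_scal_r. fold D. fold U.
    assert (U * c <= U * (D / (exp eta * z))) by (apply Rmult_le_compat_l; auto).
    unfold Rdiv in *. lra. }
  assert (Rnn : 0 <= R0) by (apply series_nonneg; auto).
  destruct (series_first rS rSnn HrS) as [R1 RS].
  fold R0 in R1, RS.
  assert (Wb : forall n, exp (eta * INR (S n)) * Rabs (wS a b z h (S n)) <= rS n).
  { intros n. unfold wS. rewrite Th1.
    pose proof (Hab (S n) ltac:(lia)) as [Ha1 Hb1]. pose proof (Thp (S n)) as Tp.
    pose proof (Ege1 (S n)) as Eg.
    set (E := exp (eta * INR (S n))) in *.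
    set (T := Theta a b z (S n)) in *.
    assert (Haz : 0 <= a (S n) * z * T) by (apply Rmult_le_pos; [apply Rmult_le_pos|]; lra).
    rewrite Rabs_mult, (Rabs_pos_eq (a (S n) * z * T)) by auto.
    assert (Htri : Rabs (h (S n) + h 1%nat - h (S (S n))) <= Rabs (h (S n)) + Rabs (h 1%nat) + Rabs (h (S (S n))))
      by (unfold Rminus; eapply Rle_trans; [apply Rabs_triang|]; rewrite Rabs_Ropp;
          pose proof (Rabs_triang (h (S n)) (h 1%nat)); lra).
    assert (HEaz : 0 <= E * (a (S n) * z * T)) by (apply Rmult_le_pos; lra).
    apply Rle_trans with (E * (a (S n) * z * T) * (Rabs (h (S n)) + Rabs (h 1%nat) + Rabs (h (S (S n))))).
    { rewrite (Rmult_assoc E). apply Rmult_le_compat_l; [lra|]. apply Rmult_le_compat_l; auto. }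
    unfold rS.
    assert (P1 : E * (a (S n) * z * T) * Rabs (h (S n)) <= pS n).
    { unfold pS, p. fold E. fold T. destruct (Hsig (S n) ltac:(lia)) as [Hs _].
      pose proof (Rabs_pos (h (S n))).
      assert (0 <= E * T * Rabs (h (S n))) by (apply Rmult_le_pos; [apply Rmult_le_pos|]; lra).
      replace (E * (a (S n) * z * T) * Rabs (h (S n))) with ((a (S n) * z) * (E * T * Rabs (h (S n)))) by ring.
      replace ((1 + Defs.sigma a b z (S n)) * E * T * Rabs (h (S n))) with ((1 + Defs.sigma a b z (S n)) * (E * T * Rabs (h (S n)))) by ring.
      apply Rmult_le_compat_r; auto. }
    assert (P2 : E * (a (S n) * z * T) * Rabs (h 1%nat) <= uS n * c).
    { unfold uS. fold E. fold T.
      replace (E * a (S n) * z * T) with (E * (a (S n) * z * T)) by ring.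
      apply Rmult_le_compat_l; auto. }
    assert (P3 : E * (a (S n) * z * T) * Rabs (h (S (S n))) <= pS (S n)).
    { unfold T. rewrite (Threc (S n)) by lia.
      unfold pS, p. rewrite (ES (S n)). fold E.
      destruct (Hsig (S (S n)) ltac:(lia)) as [_ [Hs0 Hs]]. specialize (Hs ltac:(lia)).
      pose proof (Rabs_pos (h (S (S n)))). pose proof (Thp (S (S n))).
      pose proof (Hab (S (S n)) ltac:(lia)) as [_ ?].
      set (T2 := Theta a b z (S (S n))) in *. set (X := Rabs (h (S (S n)))) in *.
      assert (0 <= T2 * X) by (apply Rmult_le_pos; lra).
      replace (E * (b (S (S n)) * T2) * X) with (E * b (S (S n)) * (T2 * X)) by ring.
      replace ((1 + Defs.sigma a b z (S (S n))) * (exp eta * E) * T2 * X)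
        with (((1 + Defs.sigma a b z (S (S n))) * (exp eta * E)) * (T2 * X)) by ring.
      apply Rmult_le_compat_r; auto.
      replace ((1 + Defs.sigma a b z (S (S n))) * (exp eta * E)) with ((exp eta * E) * (1 + Defs.sigma a b z (S (S n)))) by ring.
      apply Rmult_le_compat; try lra.
      rewrite <- (Rmult_1_l E) at 1. apply Rmult_le_compat_r; lra. }
    lra. }
  assert (TS : forall n, normZ_term a b z eta (Lop a b z h) (S n) <= exp eta * rS n + rS (S n)).
  { intros n. unfold normZ_term.
    change (Lop a b z h (S (S n))) with
      ((wS a b z h (S n) - wS a b z h (S (S n))) / Theta a b z (S (S n)) + 0).
    rewrite Rplus_0_r.
    pose proof (Thp (S (S n))) as Tp.
    assert (Theta a b z (S (S n)) * Rabs ((wS a b z h (S n) - wS a b z h (S (S n))) / Theta a b z (S (S n)))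
            = Rabs (wS a b z h (S n) - wS a b z h (S (S n)))).
    { rewrite <- (Rabs_pos_eq (Theta a b z (S (S n)))) at 1 by lra. rewrite <- Rabs_mult.
      f_equal. field. lra. }
    rewrite Rmult_assoc, H.
    pose proof (Wb n) as W1. pose proof (Wb (S n)) as W2.
    rewrite (ES (S n)). rewrite (ES (S n)) in W2.
    pose proof (Ege1 (S n)).
    assert (Rabs (wS a b z h (S n) - wS a b z h (S (S n))) <= Rabs (wS a b z h (S n)) + Rabs (wS a b z h (S (S n)))).
    { unfold Rminus. eapply Rle_trans; [apply Rabs_triang|]. rewrite Rabs_Ropp. lra. }
    set (E := exp (eta * INR (S n))) in *.
    assert (0 <= exp eta * E) by nra.
    apply Rle_trans with (exp eta * E * (Rabs (wS a b z h (S n)) + Rabs (wS a b z h (S (S n))))).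
    { apply Rmult_le_compat_l; auto. }
    assert (exp eta * E * Rabs (wS a b z h (S n)) <= exp eta * rS n).
    { rewrite Rmult_assoc. apply Rmult_le_compat_l; lra. }
    lra. }
  set (SW := Series (fun n => wS a b z h (S n))).
  set (SP := Series (fun n => a (S n) * Theta a b z 1 * Theta a b z (S n) * h (S (S n)))).
  assert (T0 : normZ_term a b z eta (Lop a b z h) 0%nat <= exp eta * (2 * R0 + 2 * D)).
  { unfold normZ_term.
    change (Lop a b z h 1%nat) with
      ((- wS a b z h 1%nat - SW) / Theta a b z 1 +
       - (a 1%nat * (Theta a b z 1) ^ 2 * h 2%nat + SP) / Theta a b z 1).
    rewrite E1, Th1.
    assert (z * Rabs ((- wS a b z h 1%nat - SW) / z + - (a 1%nat * z ^ 2 * h 2%nat + SP) / z)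
            = Rabs (- wS a b z h 1%nat - SW - (a 1%nat * z ^ 2 * h 2%nat + SP))).
    { rewrite <- (Rabs_pos_eq z) at 1 by lra. rewrite <- Rabs_mult. f_equal. field. lra. }
    rewrite Rmult_assoc, H. apply Rmult_le_compat_l; [lra|].
    assert (B1 : Rabs (wS a b z h 1%nat) <= R0).
    { pose proof (Wb O) as W. rewrite E1 in W. pose proof (Rabs_pos (wS a b z h 1%nat)). nra. }
    assert (Hw : ex_series (fun n => Rabs (wS a b z h (S n)))).
    { apply (exR_le _ rS); auto. intros n. rewrite Rabs_Rabsolu.
      pose proof (Wb n). pose proof (Ege1 (S n)). pose proof (Rabs_pos (wS a b z h (S n))). nra. }
    assert (B2 : Rabs SW <= R0).
    { eapply Rle_trans; [apply Series_Rabs; auto|]. apply Series_le; auto.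
      intros n. split; [apply Rabs_pos|].
      pose proof (Wb n). pose proof (Ege1 (S n)). pose proof (Rabs_pos (wS a b z h (S n))). nra. }
    assert (Pt : forall n, Rabs (a (S n) * Theta a b z 1 * Theta a b z (S n) * h (S (S n))) <= pS (S n)).
    { intros n. rewrite Th1.
      replace (a (S n) * z * Theta a b z (S n) * h (S (S n))) with
        ((a (S n) * z * Theta a b z (S n)) * h (S (S n))) by ring.
      rewrite (Threc (S n)) by lia. unfold pS, p.
      pose proof (Thp (S (S n))). pose proof (Hab (S (S n)) ltac:(lia)) as [_ ?].
      rewrite Rabs_mult, (Rabs_pos_eq (b (S (S n)) * Theta a b z (S (S n)))) by (apply Rmult_le_pos; lra).
      destruct (Hsig (S (S n)) ltac:(lia)) as [_ [_ Hs]]. specialize (Hs ltac:(lia)).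
      pose proof (Ege1 (S (S n))). pose proof (Rabs_pos (h (S (S n)))).
      set (E := exp (eta * INR (S (S n)))) in *.
      set (T2 := Theta a b z (S (S n))) in *. set (X := Rabs (h (S (S n)))) in *.
      assert (0 <= T2 * X) by (apply Rmult_le_pos; lra).
      replace (b (S (S n)) * T2 * X) with (b (S (S n)) * (T2 * X)) by ring.
      replace ((1 + Defs.sigma a b z (S (S n))) * E * T2 * X)
        with (((1 + Defs.sigma a b z (S (S n))) * E) * (T2 * X)) by ring.
      apply Rmult_le_compat_r; auto. nra. }
    assert (B4 : Rabs SP <= D).
    { eapply Rle_trans; [apply Series_Rabs|].
      - apply (exR_le _ (fun n => pS (S n))); auto. intros n. rewrite Rabs_Rabsolu. apply Pt.
      - eapply Rle_trans; [|exact DS]. apply Series_le; auto. intros n. split; [apply Rabs_pos|apply Pt]. }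
    assert (B3 : Rabs (a 1%nat * z ^ 2 * h 2%nat) <= D).
    { pose proof (Pt O) as P0. rewrite Th1 in P0.
      replace (a 1%nat * z ^ 2 * h 2%nat) with (a 1%nat * z * z * h 2%nat) by ring. lra. }
    assert (forall x y u v : R, Rabs (- x - y - (u + v)) <= Rabs x + Rabs y + Rabs u + Rabs v).
    { intros x y u v. unfold Rabs. repeat destruct Rcase_abs; lra. }
    specialize (H0 (wS a b z h 1%nat) SW (a 1%nat * z ^ 2 * h 2%nat) SP). lra. }
  set (G := fun n => match n with O => exp eta * (2 * R0 + 2 * D) | S m => exp eta * rS m + rS (S m) end).
  assert (HGS : ex_series (fun n => G (S n))).
  { unfold G. apply exR_plus; [apply exR_scal; auto | apply exR_S; auto]. }
  assert (HG : ex_series G) by (apply exR_S'; auto).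
  assert (Tnn : forall n, 0 <= normZ_term a b z eta (Lop a b z h) n).
  { intros n. unfold normZ_term. pose proof (Thp (S n)). pose proof (Ege1 (S n)).
    pose proof (Rabs_pos (Lop a b z h (S n))).
    apply Rmult_le_pos; [apply Rmult_le_pos|]; lra. }
  assert (TG : forall n, normZ_term a b z eta (Lop a b z h) n <= G n).
  { intros [|n]; [apply T0 | apply TS]. }
  split.
  { apply (exR_le _ G); auto. intros n. rewrite Rabs_pos_eq; auto. }
  unfold normZ. eapply Rle_trans.
  { apply Series_le; [intros n; split; auto | exact HG]. }
  rewrite (Series_incr_1 G HG).
  unfold G at 1.
  assert (Series (fun n => G (S n)) <= exp eta * R0 + R0).
  { unfold G. rewrite Series_plus by (try apply exR_scal; try apply exR_S; auto).
    rewrite Series_scal_l. fold R0. lra. }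
  assert (0 <= U / (exp eta * z)).
  { apply Rmult_le_pos; auto. apply Rlt_le, Rinv_0_lt_compat; auto. }
  assert ((3 * exp eta + 1) * R0 <= (3 * exp eta + 1) * ((2 + U / (exp eta * z)) * D)).
  { apply Rmult_le_compat_l; lra. }
  nra.
Qed.
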